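(* Let $p\geq3$ be a prime and $n\geq 1$. If $p>n$ then $\mathcal{CP}^{\mathsf{s}}_p(n)=\mathcal{SP}(n)$, and if $p=n$ then $\mathcal{CP}^{\mathsf{s}}_p(n)=\mathcal{SP}(n)\setminus\{(n)\}$.
   Context: $\mathcal{SP}(n)$ is the set of strict partitions $\xi=(\xi_1>\xi_2>\cdots)$ of $n$. $\mathcal{CP}^{\mathsf{s}}_p(n)$ is the set of $\xi\in\mathcal{SP}(n)$ such that either $1\leq\xi_1\leq\frac{p+1}{2}$, or there is an integer $u$ with $1\leq u\leq\frac{p-3}{2}$, $\xi_1=p-u$ and $\xi_2\leq u$. *)

(* Defs.v *)
From mathcomp Require Import all_boot.
Set Implicit Arguments. Unset Strict Implicit. Unset Printing Implicit Defensive.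

Definition is_strict_partition (xi : seq nat) : bool :=
  sorted (fun a b => b < a) xi && all (fun a => 0 < a) xi.

Definition SP (n : nat) (xi : seq nat) : bool :=
  is_strict_partition xi && (sumn xi == n).

(* parts xi_1, xi_2, with the usual convention xi_i = 0 if absent *)
Definition part (xi : seq nat) (i : nat) : nat := nth 0 xi i.

(* CP^s_p(n): xi in SP(n) such that either 1 <= xi_1 <= (p+1)/2,
   or there is u with 1 <= u <= (p-3)/2, xi_1 = p - u and xi_2 <= u.
   Fractions are cleared: x <= (p+1)/2 <-> 2x <= p+1, u <= (p-3)/2 <-> 2u+3 <= p. *)
Definition CPs (p n : nat) (xi : seq nat) : Prop :=
  SP n xi /\
  ((1 <= part xi 0 /\ 2 * part xi 0 <= p + 1) \/
   (exists u : nat, [/\ 1 <= u, 2 * u + 3 <= p,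
                       part xi 0 = p - u & part xi 1 <= u])).

(* Main.v *)
Require Import Defs.
From mathcomp Require Import all_boot.
From mathcomp Require Import zify.

Lemma key (p n : nat) (xi : seq nat) : odd p -> SP n xi -> 1 <= n ->
  n <= p -> part xi 0 < p -> CPs p n xi.
Proof.
move=> op H n1 np lt; split => //.
case: xi H lt => [|a r] /andP [/andP [_ Hpos] /eqP Hs] /=.
  by move: Hs n1 => /= <-.
move: Hpos => /= /andP [a1 _].
rewrite /part /= => lt.
have Hb : nth 0 r 0 + a <= n.
  by case: r Hs => [|b s] /= <-; lia.
case: (leqP (2 * a) (p + 1)) => h; first by left.
right; exists (p - a); split; try lia.
have : p = (p./2).*2.+1 by rewrite -[LHS]odd_double_half op.
move: Hb; case: (r) => [|b s] /=; lia.
Qed.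

Theorem lemma3p19 (p n : nat) :
  prime p -> 3 <= p -> 1 <= n ->
  (n < p -> forall xi : seq nat, CPs p n xi <-> SP n xi) /\
  (p = n -> forall xi : seq nat, CPs p n xi <-> (SP n xi /\ xi <> [:: n])).
Proof.
move=> pp p3 n1.
have op : odd p.
  by case: (even_prime pp) => // E; move: p3; rewrite E.
split.
  move=> np xi; split; first by case.
  move=> H; apply: key => //; first lia.
  case: xi H => [|a r] /andP [_ /eqP Hs]; rewrite /part /=; first lia.
  move: Hs => /= ?; lia.
move=> pn xi; split.
  case=> H [[a1 a2]|[u [u1 u2 u3 u4]]]; split=> // E.
    by move: a2; rewrite E /part /=; lia.
  by move: u3; rewrite E /part /=; lia.
case=> H ne; apply: key => //; first lia.
case: xi H ne => [|a r] /andP [/andP [_ Hpos] /eqP Hs] ne; rewrite /part /=; first lia.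
case: r Hs Hpos ne => [|b s] /= Hs Hpos ne.
  by exfalso; apply: ne; rewrite -Hs addn0.
by move: Hpos => /andP [_ /andP [b1 _]]; lia.
Qed.
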